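(* For every finite graph $G$, $\mathrm{lw}_{\chi(G)}(G)\leq \chi(G)$, where $\chi(G)$ is the chromatic number of $G$.
   Context: All graphs are finite, simple and undirected. For vertices $u,v$ of a connected graph, the interval $I(u,v)$ is the set of vertices lying on some shortest $(u,v)$-path. A set $S$ of vertices is (geodesically) convex if $I(u,v)\subseteq S$ for all $u,v\in S$. A graph $M$ is median if it is connected and for any three vertices $u,v,w$ we have $|I(u,v)\cap I(v,w)\cap I(w,u)|=1$. A median decomposition of a graph $G$ is a pair $(M,\mathcal{X})$ where $M$ is a median graph and $\mathcal{X}=(X_a)_{a\in V(M)}$ is a family of subsets of $V(G)$ (bags) such that (M1) for every edge $uv\in E(G)$ there is $a\in V(M)$ with $u,v\in X_a$, and (M2) for every $v\in V(G)$ the set $\{a\in V(M): v\in X_a\}$ is non-empty and convex in $M$. Its width is $\max_{a\in V(M)}|X_a|$. A $k$-lattice is a Cartesian product of $k$ (finite) paths. The lattice dimension of a graph $M$ is the least $k$ such that $M$ admits an isometric (distance-preserving) embedding into a $k$-lattice. For $i\geq1$, an $i$-lattice decomposition of $G$ is a median decomposition $(M,\mathcal{X})$ of $G$ with $M$ of lattice dimension at most $i$, and the $i$-latticewidth $\mathrm{lw}_i(G)$ is the minimum width of an $i$-lattice decomposition of $G$. *)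

(* Defs.v *)
From mathcomp Require Import all_boot.
Set Implicit Arguments. Unset Strict Implicit. Unset Printing Implicit Defensive.

Section Graphs.
Variable A : finType.
Variable f : rel A.

(* a walk from u to v: the sequence u :: p is an f-path ending at v; its length is size p *)
Definition walk (u v : A) (p : seq A) : bool := path f u p && (last u p == v).

Definition shortest (u v : A) (p : seq A) : Prop :=
  walk u v p /\ forall q, walk u v q -> size p <= size q.

Definition is_dist (u v : A) (n : nat) : Prop :=
  exists p, shortest u v p /\ size p = n.

Definition in_interval (u v w : A) : Prop :=
  exists p, shortest u v p /\ w \in u :: p.

Definition convex (S : {set A}) : Prop :=
  forall u v w, u \in S -> v \in S -> in_interval u v w -> w \in S.

Definition connected : Prop := forall u v, exists p, walk u v p.

Definition simple_graph : Prop := symmetric f /\ irreflexive f.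

Definition median : Prop :=
  simple_graph /\ connected /\
  forall u v w, exists! x, in_interval u v x /\ in_interval v w x /\ in_interval w u x.
End Graphs.

Definition colorable (T : finType) (e : rel T) (c : nat) : Prop :=
  exists col : T -> 'I_c, forall u v, e u v -> col u != col v.

Definition chromatic_number (T : finType) (e : rel T) (k : nat) : Prop :=
  colorable e k /\ forall c, colorable e c -> k <= c.

(* the k-lattice P_{n 0} □ ... □ P_{n (k-1)}: vertices are tuples of coordinates,
   adjacent iff they differ in exactly one coordinate, by exactly 1 *)
Definition lattice_vtx (k : nat) (n : 'I_k -> nat) : finType :=
  {dffun forall j : 'I_k, 'I_(n j)}.

Definition lattice_rel (k : nat) (n : 'I_k -> nat) : rel (lattice_vtx n) :=
  fun x y => [exists j, (((x j).+1 == y j :> nat) || ((y j).+1 == x j :> nat))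
                         && [forall j', (j' != j) ==> (x j' == y j')]].

Definition isometric (A B : finType) (fA : rel A) (fB : rel B) (phi : A -> B) : Prop :=
  forall u v n, is_dist fA u v n <-> is_dist fB (phi u) (phi v) n.

Definition lattice_dim_le (A : finType) (fA : rel A) (i : nat) : Prop :=
  exists k, k <= i /\ exists (n : 'I_k -> nat) (phi : A -> lattice_vtx n),
    isometric fA (@lattice_rel k n) phi.

Definition median_decomposition (T : finType) (e : rel T)
    (A : finType) (fM : rel A) (X : A -> {set T}) : Prop :=
  median fM /\
  (forall u v, e u v -> exists a, (u \in X a) && (v \in X a)) /\
  (forall v, (exists a, v \in X a) /\ convex fM [set a | v \in X a]).

Definition width_le (T A : finType) (X : A -> {set T}) (w : nat) : Prop :=
  forall a, #|X a| <= w.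

Definition lw_le (T : finType) (e : rel T) (i w : nat) : Prop :=
  exists (A : finType) (fM : rel A) (X : A -> {set T}),
    median_decomposition e fM X /\ lattice_dim_le fM i /\ width_le X w.

(* Main.v *)
Require Import Defs.
From mathcomp Require Import all_boot.
From mathcomp Require Import zify.
Set Implicit Arguments. Unset Strict Implicit. Unset Printing Implicit Defensive.

Section Grid.
Variables (k : nat) (n : 'I_k -> nat).
Local Notation L := (lattice_vtx n).
Local Notation E := (@lattice_rel k n).

Implicit Types (x y z w u v : L) (p : seq L).
Definition cx x (i : 'I_k) : nat := x i.
Arguments cx : simpl never.
Lemma cxE x j : nat_of_ord (x j) = cx x j. Proof. by []. Qed.
Ltac nlia := repeat match goal with
  | H : context [@nat_of_ord _ (@fun_of_fin _ _ _ _ _)] |- _ => rewrite cxE in H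
  | |- context [@nat_of_ord _ (@fun_of_fin _ _ _ _ _)] => rewrite cxE end; lia.
Definition d1 (a b : nat) := (a - b) + (b - a).
Definition D (x y : L) := \sum_(i < k) d1 (x i) (y i).

Lemma L_eq (x y : L) : (forall i, (x i : nat) = y i) -> x = y.
Proof. move=> H; apply/ffunP=> i; apply/val_inj; exact: H. Qed.

Lemma D_tri x y z : D x z <= D x y + D y z.
Proof. rewrite /D -big_split /=; apply: leq_sum => i _; rewrite /d1; nlia. Qed.

Lemma D_xx x : D x x = 0.
Proof. by rewrite /D big1 // => i _; rewrite /d1 subnn. Qed.

Lemma d1_le_D x y i : d1 (x i) (y i) <= D x y.
Proof. by rewrite /D (bigD1 i) //= leq_addr. Qed.

Lemma D0 x y : D x y = 0 -> x = y.
Proof. move=> H; apply: L_eq => i; have := d1_le_D x y i; rewrite H /d1; nlia. Qed.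

Lemma edge_D x y : E x y -> D x y = 1.
Proof.
case/existsP=> j /andP[Hj /forallP Hall].
rewrite /D (bigD1 j) //= big1 => [|i ij].
- rewrite addn0 /d1; case/orP: Hj => /eqP H; nlia.
- by move: (Hall i); rewrite ij /= => /eqP ->; rewrite /d1 subnn.
Qed.

Lemma walk_len x p : path E x p -> D x (last x p) <= size p.
Proof.
elim: p x => [|y p IH] x /=; first by rewrite D_xx.
case/andP=> Hxy Hp; apply: leq_trans (D_tri x y _) _.
by rewrite edge_D // add1n ltnS; exact: IH.
Qed.

Lemma on_walk x p w : path E x p -> w \in x :: p ->
  D x w + D w (last x p) <= size p.
Proof.
elim: p x => [|y p IH] x /=.
- by rewrite inE => _ /eqP ->; rewrite D_xx.
- case/andP=> Hxy Hp; rewrite inE => /orP[/eqP ->|Hw].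
  + rewrite D_xx add0n; apply: leq_trans (D_tri x y _) _.
    by rewrite edge_D // add1n ltnS; exact: walk_len.
  + have A2 := IH y Hp Hw; have A1 := D_tri x y w; rewrite (edge_D Hxy) in A1.
    by apply: leq_trans (leq_add A1 (leqnn _)) _; rewrite -addnA add1n ltnS.
Qed.

Lemma walk_ex x y : exists p, walk E x y p /\ size p = D x y.
Proof.
suff: forall m x, D x y = m -> exists p, walk E x y p /\ size p = m.
  by move/(_ _ x erefl).
elim=> [|m IH] {}x Hm.
  by exists [::]; rewrite (D0 Hm) /walk /= eqxx.
case: (boolP [exists j, (x j : nat) != y j]); last first.
  move/existsPn=> H; have Hxy : x = y by apply: L_eq => i; apply/eqP; move: (H i); rewrite negbK.
  by move: Hm; rewrite Hxy D_xx.
case/existsP=> j Hj.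
pose g i := if i == j then (if (x j : nat) < y j then (x j).+1 else (x j).-1) else (x i : nat).
pose x' := (@finfun _ (fun i => 'I_(n i)) (fun i => insubd (x i) (g i)) : L).
have Hb : g j < n j.
  rewrite /g eqxx; have := ltn_ord (y j); have := ltn_ord (x j); case: ifP => Hlt; nlia.
have Hx' : forall i, (x' i : nat) = g i.
  move=> i; rewrite /x' ffunE val_insubd; case: (eqVneq i j) => [->|ij]; first by rewrite Hb.
  by rewrite /g (negbTE ij) ltn_ord.
have Hxx' : E x x'.
  apply/existsP; exists j; apply/andP; split.
    rewrite Hx' /g eqxx; move: Hj; case: ifP => Hlt Hj; apply/orP; [left|right]; apply/eqP; nlia.
  apply/forallP => i; apply/implyP => ij; rewrite -val_eqE /= Hx' /g (negbTE ij) //.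
have HD : D x y = (D x' y).+1.
  rewrite /D (bigD1 j) //= [in RHS](bigD1 j) //=.
  rewrite [in RHS](eq_bigr (fun i => d1 (x i) (y i))) => [|i ij]; last by rewrite Hx' /g (negbTE ij).
  rewrite Hx' /g eqxx -addSn; congr (_ + _); move: Hj; case: ifP => Hlt Hj; rewrite /d1; nlia.
have [p [Hp Hs]] := IH x' ltac:(nlia).
exists (x' :: p); split; last by rewrite /= Hs.
by move: Hp; rewrite /walk /= Hxx'.
Qed.

Lemma shortest_iff x y p : shortest E x y p <-> walk E x y p /\ size p = D x y.
Proof.
split.
- case=> Hw Hmin; have [q [Hq Hs]] := walk_ex x y; split => //.
  apply/eqP; rewrite eqn_leq -{1}Hs Hmin //=.
  by case/andP: Hw => Hp /eqP <-; exact: walk_len.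
- case=> Hw Hs; split => // q /andP[Hq /eqP Hl]; rewrite Hs -Hl; exact: walk_len.
Qed.

Lemma interval_iff x y w : in_interval E x y w <-> D x w + D w y = D x y.
Proof.
split.
- case=> p [/shortest_iff [Hw Hs] Hwp]; case/andP: Hw => Hp /eqP Hl.
  have := on_walk Hp Hwp; rewrite Hl; have := D_tri x w y; nlia.
- move=> H; have [p1 [/andP [H1 /eqP L1] S1]] := walk_ex x w.
  have [p2 [/andP [H2 /eqP L2] S2]] := walk_ex w y.
  exists (p1 ++ p2); split.
    apply/shortest_iff; split; last by rewrite size_cat S1 S2.
    by rewrite /walk cat_path last_cat L1 H1 H2 L2 eqxx.
  by rewrite -cat_cons mem_cat -L1 mem_last.
Qed.

Lemma sum_eq_le (F G : 'I_k -> nat) i : (forall j, G j <= F j) ->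
  \sum_(j < k) F j = \sum_(j < k) G j -> F i = G i.
Proof.
move=> H E1; rewrite (bigD1 i) //= in E1; rewrite [X in _ = X](bigD1 i) //= in E1.
apply/eqP; rewrite eqn_leq H andbT.
rewrite -(leq_add2r (\sum_(j < k | j != i) F j)) E1 leq_add2l.
by apply: leq_sum.
Qed.

Lemma coord_between x y w : D x w + D w y = D x y ->
  forall i, d1 (x i) (w i) + d1 (w i) (y i) = d1 (x i) (y i).
Proof.
move=> H i.
apply: (@sum_eq_le (fun j => d1 (x j) (w j) + d1 (w j) (y j)) (fun j => d1 (x j) (y j))).
  by move=> j; rewrite /d1; nlia.
by move: H; rewrite /D -big_split.
Qed.

Lemma between_coord x y w :
  (forall i, d1 (x i) (w i) + d1 (w i) (y i) = d1 (x i) (y i)) ->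
  D x w + D w y = D x y.
Proof. by move=> H; rewrite /D -big_split; apply: eq_bigr => i _; exact: H. Qed.

Definition med (a b c : nat) := maxn (minn a b) (minn (maxn a b) c).

Lemma grid_median : median E.
Proof.
split; [split|split].
- move=> x y; rewrite /lattice_rel; apply/existsP/existsP => -[j /andP [H1 /forallP H2]];
  exists j; rewrite orbC H1 /=; apply/forallP => j'; apply/implyP => Hj;
  rewrite eq_sym; exact: (implyP (H2 j') Hj).
- move=> x; apply/negbTE/negP; rewrite /lattice_rel /= => /existsP [j /andP [/orP [] /eqP H _]]; nlia.
- by move=> u v; have [p [Hp _]] := walk_ex u v; exists p.
- move=> u v w.
  pose m := (@finfun _ (fun i => 'I_(n i)) (fun i => insubd (u i) (med (u i) (v i) (w i))) : L).
  have Hm : forall i, (m i : nat) = med (u i) (v i) (w i).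
    move=> i; rewrite /m ffunE val_insubd ifT //.
    have := ltn_ord (u i); have := ltn_ord (v i); have := ltn_ord (w i); rewrite /med; nlia.
  exists m; split.
    split; [|split]; apply/interval_iff/between_coord => i; rewrite Hm /med /d1; nlia.
  move=> x [/interval_iff/coord_between H1 [/interval_iff/coord_between H2 /interval_iff/coord_between H3]].
  apply: L_eq => i; move: (H1 i) (H2 i) (H3 i); rewrite Hm /med /d1; nlia.
Qed.

End Grid.

Theorem mainTheorem1 (T : finType) (e : rel T) (Hsimple : simple_graph e)
  (k : nat) (Hchi : chromatic_number e k) :
  lw_le e k k.
Proof.
case: Hchi => [[col Hcol] _].
pose n := fun j : 'I_k => #|[set u | col u == j]|.+1.
pose r := fun v => index v (enum [set u | col u == col v]).
have Hr : forall v, r v < #|[set u | col u == col v]|.+1.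
  by move=> v; rewrite ltnS cardE index_size.
pose X := fun a : lattice_vtx n => [set v | (a (col v) : nat) == r v].
exists (lattice_vtx n), (@lattice_rel k n), X.
split; [split; [|split]|split].
- exact: grid_median.
- move=> u v Huv.
  exists (@finfun _ (fun j => 'I_(n j))
     (fun j => inord (if j == col u then r u else if j == col v then r v else 0))).
  have Hcv := Hcol u v Huv.
  have Hvu : (col v == col u) = false by rewrite eq_sym (negbTE Hcv).
  rewrite /X !inE !ffunE eqxx Hvu eqxx.
  by rewrite !inordK ?eqxx ?Hr.
- move=> v; split.
    exists (@finfun _ (fun j => 'I_(n j)) (fun j => inord (if j == col v then r v else 0))).
    by rewrite /X inE ffunE eqxx inordK.
  move=> a b c; rewrite !inE => /eqP Ha /eqP Hb /interval_iff /coord_between /(_ (col v)).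
  rewrite Ha Hb /d1 => H; apply/eqP; lia.
- exists k; split => //; exists n, id => u v m; split => H; exact: H.
- move=> a.
  have inj : {in X a &, injective col}.
    move=> u v; rewrite !inE => /eqP Hu /eqP Hv Huv.
    rewrite Huv Hv /r Huv in Hu.
    have Hu' : u \in enum [set w | col w == col v] by rewrite mem_enum inE Huv.
    have Hv' : v \in enum [set w | col w == col v] by rewrite mem_enum inE.
    by rewrite -(nth_index u Hu') -Hu (nth_index u Hv').
  rewrite -(card_in_imset inj); apply: leq_trans (max_card _) _; by rewrite card_ord.
Qed.
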